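(* Let $n,m,k$ be integers with $n\geq m\geq 1$ and $k\geq 3$. Then $$ gr_{k}(K_{3} : S(n,m))\geq \begin{cases} \max\{5\cdot\frac{n}{2},\,n+2m+1\} + m(k-3)+1 & \text{ if $n$ is even,}\\ \max\{5\cdot\frac{n-1}{2},\,n+2m+1\}+ m(k-3)+ 2 & \text{ if $n$ is odd.} \end{cases} $$
   Context: For integers $n\geq m\geq 0$, the double star $S(n,m)$ is the graph obtained from the disjoint union of the stars $K_{1,n}$ and $K_{1,m}$ by adding an edge between their centers. A $k$-coloring of a graph is an assignment of one of $k$ colors to each edge. A subgraph is rainbow if all its edges have distinct colors and monochromatic if all its edges have the same color. For graphs $G,H$ and a positive integer $k$, the Gallai–Ramsey number $gr_k(G:H)$ is the minimum integer $N$ such that every $k$-coloring of the edges of the complete graph $K_N$ contains either a rainbow copy of $G$ or a monochromatic copy of $H$. *)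

(* Defs.v *)
From mathcomp Require Import all_boot.
Set Implicit Arguments. Unset Strict Implicit. Unset Printing Implicit Defensive.

(* A graph H is given by a finite vertex type V and a symmetric,
   irreflexive adjacency relation. *)

(* A k-coloring of the edges of K_N: a symmetric map c : 'I_N -> 'I_N -> 'I_k
   (its values on the diagonal are irrelevant). *)
Definition edge_coloring (N k : nat) (c : 'I_N -> 'I_N -> 'I_k) : Prop :=
  forall x y, c x y = c y x.

(* A copy of H in K_N: an injective vertex map (K_N is complete, so every
   injective map is an embedding of H as a subgraph). *)

Definition rainbow_copy (V : finType) (e : rel V) (N k : nat)
    (c : 'I_N -> 'I_N -> 'I_k) (f : V -> 'I_N) : Prop :=
  injective f /\
  forall x y x' y', e x y -> e x' y' ->
    ~ ((x = x' /\ y = y') \/ (x = y' /\ y = x')) ->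
    c (f x) (f y) <> c (f x') (f y').

Definition mono_copy (V : finType) (e : rel V) (N k : nat)
    (c : 'I_N -> 'I_N -> 'I_k) (f : V -> 'I_N) : Prop :=
  injective f /\
  forall x y x' y', e x y -> e x' y' -> c (f x) (f y) = c (f x') (f y').

Definition K3_rel : rel 'I_3 := fun i j => i != j.

(* Double star S(n,m) on 'I_(n+m+2): vertex 0 is the center of K_{1,n},
   vertex 1 the center of K_{1,m}; vertices 2..n+1 are the n leaves of 0,
   vertices n+2..n+m+1 are the m leaves of 1; plus the edge 0-1. *)
Definition ds_adj (n m : nat) (i j : 'I_(n + m + 2)) : bool :=
  [|| ((i : nat) == 0) && ((j : nat) == 1),
      ((i : nat) == 0) && (2 <= j) && (j < n + 2)
    | ((i : nat) == 1) && (n + 2 <= j)].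

Arguments ds_adj : clear implicits.
Definition double_star_rel (n m : nat) : rel 'I_(n + m + 2) :=
  fun i j => ds_adj n m i j || ds_adj n m j i.

Definition GR_property (VG : finType) (eG : rel VG) (VH : finType) (eH : rel VH)
    (k N : nat) : Prop :=
  forall c : 'I_N -> 'I_N -> 'I_k, edge_coloring c ->
    (exists f : VG -> 'I_N, rainbow_copy eG c f) \/
    (exists f : VH -> 'I_N, mono_copy eH c f).

(* gr_k(G:H) >= L  iff  L <= every N with the GR property (gr is the least such N). *)
Definition gr_ge (VG : finType) (eG : rel VG) (VH : finType) (eH : rel VH)
    (k L : nat) : Prop :=
  forall N, GR_property eG eH k N -> L <= N.
Arguments double_star_rel : clear implicits.

(* Main.v *)
Require Import Defs.
From mathcomp Require Import all_boot.
From mathcomp Require Import zify.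
Set Implicit Arguments. Unset Strict Implicit. Unset Printing Implicit Defensive.

Definition NR (a b c : nat) : Prop := a = b \/ b = c \/ a = c.

Definition blk (b m x : nat) := (x - b) %/ m.

Definition gcol (b m o : nat) (beta : nat -> nat -> nat) (x y : nat) : nat :=
  if (x < b) && (y < b) then beta x y
  else if [&& b <= x, b <= y & blk b m x == blk b m y] then 0
  else o + blk b m (maxn x y).

Lemma blk_spec b m x : 0 < m -> b <= x ->
  b + blk b m x * m <= x < b + blk b m x * m + m.
Proof.
move=> hm hx; rewrite /blk.
have := divn_eq (x - b) m; have := ltn_pmod (x - b) hm.
set q := (x - b) %/ m; set r := (x - b) %% m. lia.
Qed.

Lemma blk_mono b m x y : x <= y -> blk b m x <= blk b m y.
Proof. by move=> h; rewrite /blk leq_div2r // leq_sub2r. Qed.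

Lemma gcol_sym b m o beta x y : (forall x y, beta x y = beta y x) ->
  gcol b m o beta x y = gcol b m o beta y x.
Proof.
move=> hs; rewrite /gcol hs maxnC eq_sym.
by case: (x < b); case: (y < b); case: (b <= x); case: (b <= y).
Qed.

Lemma gcol_base b m o beta x w : x < b -> w < b -> gcol b m o beta x w = beta x w.
Proof. by move=> h1 h2; rewrite /gcol h1 h2. Qed.

Lemma gcol_lo b m o beta x w : x < b -> b <= w -> gcol b m o beta x w = o + blk b m w.
Proof.
move=> h1 h2; rewrite /gcol h1 ltnNge h2 /= leqNgt h1 /=.
by congr (_ + blk _ _ _); lia.
Qed.

Lemma gcol_hi b m o beta x w : b <= x -> b <= w -> x <= w ->
  gcol b m o beta x w = if blk b m x == blk b m w then 0 else o + blk b m w.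
Proof.
move=> h1 h2 h3; rewrite /gcol (ltnNge x b) h1 /= h2 /=.
by case: ifP => //; have -> : maxn x w = w by lia.
Qed.

Lemma gcol_lt b m o beta r N x y : 0 < m -> (forall x y, beta x y < o) ->
  x < N -> y < N -> N <= b + m * r -> gcol b m o beta x y < o + r.
Proof.
move=> hm hb hx hy hN; rewrite /gcol.
case: ifP => [_|hA]; first by have := hb x y; lia.
case: ifP => _; first by have := hb x y; lia.
have hM : b <= maxn x y.
  by move/negbT: hA; rewrite negb_and -!leqNgt; case/orP => h; lia.
have := blk_spec hm hM. set q := blk b m (maxn x y) => hq.
have : q * m < r * m by rewrite [r * m]mulnC; lia.
rewrite ltn_pmul2r // => hqr; lia.
Qed.

Lemma gcol_nr_sorted b m o beta x y z : 0 < m ->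
  (forall x y z, x < b -> y < b -> z < b -> NR (beta x y) (beta y z) (beta x z)) ->
  x < y -> y < z ->
  NR (gcol b m o beta x y) (gcol b m o beta y z) (gcol b m o beta x z).
Proof.
move=> hm hB hxy hyz.
case: (ltnP z b) => hz.
  rewrite !gcol_base; try lia. apply: hB; lia.
case: (ltnP y b) => hy.
  rewrite (@gcol_lo _ _ _ _ x z) ?(@gcol_lo _ _ _ _ y z); try lia.
  by right; left.
case: (ltnP x b) => hx.
  rewrite (@gcol_lo _ _ _ _ x z) ?(@gcol_lo _ _ _ _ x y) ?(@gcol_hi _ _ _ _ y z); try lia.
  case: eqP => e; first by right; right; rewrite e.
  by right; left.
rewrite !gcol_hi; try lia.
have m1 := blk_mono b m (ltnW hxy); have m2 := blk_mono b m (ltnW hyz).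
case: (eqVneq (blk b m y) (blk b m z)) => e.
  by right; right; rewrite e.
have e2 : blk b m x != blk b m z by apply/eqP; lia.
by rewrite (negbTE e2); case: ifP => _; right; left.
Qed.

Lemma gcol_nr b m o beta x y z : 0 < m -> (forall x y, beta x y = beta y x) ->
  (forall x y z, x < b -> y < b -> z < b -> NR (beta x y) (beta y z) (beta x z)) ->
  x != y -> y != z -> x != z ->
  NR (gcol b m o beta x y) (gcol b m o beta y z) (gcol b m o beta x z).
Proof.
move=> hm hs hB h1 h2 h3.
have P := fun p q r (h1 : p < q) (h2 : q < r) => @gcol_nr_sorted b m o beta p q r hm hB h1 h2.
have := @gcol_sym b m o beta x y hs; have := @gcol_sym b m o beta x z hs;
have := @gcol_sym b m o beta y z hs.
move: h1 h2 h3; rewrite !neq_ltn => /orP[h1|h1] /orP[h2|h2] /orP[h3|h3]; try (exfalso; lia).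
all: first [ move: (P x y z ltac:(lia) ltac:(lia)) | move: (P x z y ltac:(lia) ltac:(lia))
      | move: (P y x z ltac:(lia) ltac:(lia)) | move: (P y z x ltac:(lia) ltac:(lia))
      | move: (P z x y ltac:(lia) ltac:(lia)) | move: (P z y x ltac:(lia) ltac:(lia)) ];
rewrite /NR; move=> H s1 s2 s3; rewrite ?s1 ?s2 ?s3 in H *; lia.
Qed.

Lemma inj_count (F : nat -> nat) (t s : seq nat) : uniq t -> {in t &, injective F} ->
  (forall i, i \in t -> F i \in s) -> size t <= size s.
Proof.
move=> ut hi hs; rewrite -(size_map F); apply: uniq_leq_size.
  by rewrite map_inj_in_uniq.
by move=> y /mapP [i Hi ->]; apply: hs.
Qed.

Lemma nb_block b m o beta e j w : 0 < o -> (forall x y, beta x y < o) ->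
  (e < b \/ (b <= e /\ blk b m e < j)) -> gcol b m o beta e w = o + j ->
  b <= w /\ blk b m w = j.
Proof.
move=> ho hb he.
case: (ltnP w b) => hw.
  case: he => [he|[he hj]].
    by rewrite gcol_base //; have := hb e w; lia.
  rewrite /gcol (ltnNge e b) he /= (leqNgt b w) hw /=.
  have -> : maxn e w = e by lia.
  lia.
case: he => [he|[he hj]].
  by rewrite gcol_lo //; split => //; lia.
case: (leqP w e) => hwe.
  rewrite /gcol (ltnNge e b) he /= hw /=.
  have -> : maxn e w = e by lia.
  case: ifP => _; lia.
rewrite gcol_hi //; last by lia.
case: ifP => _; [lia | split => //; lia].
Qed.

Lemma no_mono n m b o beta (F : nat -> nat) : 0 < m -> m <= n -> 0 < o ->
  (forall x y, beta x y = beta y x) -> (forall x y, beta x y < o) ->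
  (forall F : nat -> nat, (forall i, i < n+m+2 -> F i < b) ->
      {in iota 0 (n+m+2) &, injective F} ->
      (forall i, 1 <= i < n+2 -> beta (F 0) (F i) = beta (F 0) (F 1)) -> False) ->
  {in iota 0 (n+m+2) &, injective F} ->
  (forall i, 1 <= i < n+2 -> gcol b m o beta (F 0) (F i) = gcol b m o beta (F 0) (F 1)) ->
  (forall i, n+2 <= i < n+m+2 -> gcol b m o beta (F 1) (F i) = gcol b m o beta (F 0) (F 1)) ->
  False.
Proof.
move=> hm hmn ho hs hb hBase hinj hU hV.
have sub t : {subset t <= iota 0 (n+m+2)} -> {in t &, injective F}.
  by move=> ht; apply: sub_in2 hinj.
have uv : F 0 != F 1.
  apply/eqP => e; have := hinj 0 1; rewrite !mem_iota => h; have := h ltac:(lia) ltac:(lia) e; lia.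
set u := F 0 in uv hU hV *; set v := F 1 in uv hU hV *.
set c0 := gcol b m o beta u v in hU hV *.
have hV0 : gcol b m o beta v (F 0) = c0 by rewrite gcol_sym.
case: (boolP ((u < b) && (v < b))) => hA.
  move/andP: hA => [hu hv].
  have hc0 : c0 = beta u v by rewrite /c0 gcol_base.
  have Fb : forall i, i < n+m+2 -> F i < b.
    move=> i hi; case: (ltnP (F i) b) => // hF.
    case: (ltnP i (n+2)) => hi2.
      case: (eqVneq i 0) => [e0|hi0]; first by move: hF; rewrite e0 -/u; lia.
      have := hU i; rewrite gcol_lo //; have := hb u v; lia.
    have := hV i; rewrite gcol_lo //; have := hb u v; lia.
  apply: (hBase F Fb hinj) => i hi.
  have hFi : F i < b by apply: Fb; lia.
  by rewrite -(@gcol_base b m o beta u (F i)) // hU.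
case: (boolP [&& b <= u, b <= v & blk b m u == blk b m v]) => hS.
  have hc0 : c0 = 0 by rewrite /c0 /gcol (negbTE hA) hS.
  move/and3P: hS => [hu hv /eqP huv].
  have := @inj_count F (iota 0 (n+2)) (iota (b + blk b m u * m) m) (iota_uniq _ _).
  rewrite !size_iota => H; suff: n + 2 <= m by lia.
  apply: H; first by apply: sub => i; rewrite !mem_iota; lia.
  move=> i; rewrite mem_iota => hi.
  case: (eqVneq i 0) => [->|hi0].
    by rewrite mem_iota; have := blk_spec hm hu; rewrite -/u; lia.
  have := hU i; rewrite hc0 /gcol (ltnNge u) hu /=.
  case: ifP; last by lia.
  move/andP => [hw /eqP hbw] _.
  have := blk_spec hm hw; rewrite -hbw mem_iota; lia.
have hc0 : c0 = o + blk b m (maxn u v) by rewrite /c0 /gcol (negbTE hA) (negbTE hS).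
case: (ltngtP u v) => huv; last by rewrite huv eqxx in uv.
- have hv : b <= v by move: hA; rewrite negb_and -!leqNgt; case/orP; lia.
  have hmx : maxn u v = v by lia.
  have he : u < b \/ (b <= u /\ blk b m u < blk b m v).
    case: (ltnP u b) => hu; [by left | right; split => //].
    have := blk_mono b m (ltnW huv).
    move: hS; rewrite hu hv /= => /eqP; lia.
  have := @inj_count F (iota 1 (n+1)) (iota (b + blk b m v * m) m) (iota_uniq _ _).
  rewrite !size_iota => H; suff: n + 1 <= m by lia.
  apply: H; first by apply: sub => i; rewrite !mem_iota; lia.
  move=> i; rewrite mem_iota => hi.
  have hcol : gcol b m o beta u (F i) = o + blk b m v.
    by rewrite hU ?hc0 ?hmx //; lia.
  have [hw hbw] := nb_block ho hb he hcol.
  have := blk_spec hm hw; rewrite hbw mem_iota; lia.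
- have hu : b <= u by move: hA; rewrite negb_and -!leqNgt; case/orP; lia.
  have hmx : maxn u v = u by lia.
  have he : v < b \/ (b <= v /\ blk b m v < blk b m u).
    case: (ltnP v b) => hv; [by left | right; split => //].
    have := blk_mono b m (ltnW huv).
    move: hS; rewrite hu hv /= => /eqP; lia.
  have := @inj_count F (0 :: iota (n+2) m) (iota (b + blk b m u * m) m).
  rewrite /= !size_iota mem_iota iota_uniq andbT => H; suff: m.+1 <= m by lia.
  apply: H; first by lia.
    by apply: sub => i; rewrite inE !mem_iota; lia.
  move=> i; rewrite inE mem_iota => hi.
  have hcol : gcol b m o beta v (F i) = o + blk b m u.
    case/orP: hi => [/eqP ->|hi]; first by rewrite hV0 hc0 hmx.
    by rewrite hV ?hc0 ?hmx //; lia.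
  have [hw hbw] := nb_block ho hb he hcol.
  have := blk_spec hm hw; rewrite hbw mem_iota; lia.
Qed.

Lemma scheme_fail n m k' N b o r beta :
  0 < m -> m <= n -> 0 < o -> o + r <= k'.+1 -> N <= b + m * r ->
  (forall x y, beta x y = beta y x) -> (forall x y, beta x y < o) ->
  (forall x y z, x < b -> y < b -> z < b -> NR (beta x y) (beta y z) (beta x z)) ->
  (forall F : nat -> nat, (forall i, i < n+m+2 -> F i < b) ->
      {in iota 0 (n+m+2) &, injective F} ->
      (forall i, 1 <= i < n+2 -> beta (F 0) (F i) = beta (F 0) (F 1)) -> False) ->
  ~ GR_property K3_rel (double_star_rel n m) k'.+1 N.
Proof.
move=> hm hmn ho hok hN hs hb hB hBase HGR.
pose c := fun x y : 'I_N => (inord (gcol b m o beta x y) : 'I_k'.+1).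
have ec : edge_coloring c by move=> x y; rewrite /c gcol_sym.
have cE : forall x y x' y' : 'I_N, c x y = c x' y' ->
    gcol b m o beta x y = gcol b m o beta x' y'.
  move=> x y x' y' /(congr1 (@nat_of_ord _)); rewrite /c !inordK //;
    apply: (leq_trans (@gcol_lt b m o beta r N _ _ hm hb _ _ hN) hok) => //.
case: (HGR c ec) => [[f [finj Hf]] | [f [finj Hf]]].
  pose o0 := @Ordinal 3 0 isT; pose o1 := @Ordinal 3 1 isT; pose o2 := @Ordinal 3 2 isT.
  have dd : forall i j : 'I_3, i != j -> val (f i) != val (f j).
    by move=> i j hij; rewrite (inj_eq val_inj) (inj_eq finj).
  have := @gcol_nr b m o beta _ _ _ hm hs hB (dd o0 o1 isT) (dd o1 o2 isT) (dd o0 o2 isT).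
  case=> [E|[E|E]].
  - apply: (Hf o0 o1 o1 o2) => //; last by rewrite /c E.
    case=> [[h1 h2]|[h1 h2]]; move/(congr1 val): h1 => /= h1;
      move/(congr1 val): h2 => /= h2; done.
  - apply: (Hf o1 o2 o0 o2) => //; last by rewrite /c E.
    case=> [[h1 h2]|[h1 h2]]; move/(congr1 val): h1 => /= h1;
      move/(congr1 val): h2 => /= h2; done.
  - apply: (Hf o0 o1 o0 o2) => //; last by rewrite /c E.
    case=> [[h1 h2]|[h1 h2]]; move/(congr1 val): h1 => /= h1;
      move/(congr1 val): h2 => /= h2; done.
pose F (i : nat) : nat :=
  match (insub i : option 'I_(n+m+2)) with Some j => val (f j) | None => 0 end.
have FE : forall i (hi : i < n+m+2), F i = val (f (Ordinal hi)).
  by move=> i hi; rewrite /F insubT.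
have h0 : 0 < n+m+2 by lia.
have h1 : 1 < n+m+2 by lia.
have Finj : {in iota 0 (n+m+2) &, injective F}.
  move=> i j; rewrite !mem_iota => hi hj.
  have hi' : i < n+m+2 by lia.
  have hj' : j < n+m+2 by lia.
  rewrite (FE i hi') (FE j hj') => /val_inj /finj /(congr1 val) //.
have E01 : double_star_rel n m (Ordinal h0) (Ordinal h1).
  by rewrite /double_star_rel /ds_adj /=; lia.
apply: (@no_mono n m b o beta F hm hmn ho hs hb hBase Finj).
  move=> i hi.
  have hi' : i < n+m+2 by lia.
  rewrite (FE i hi') (FE 0 h0) (FE 1 h1); apply: cE; apply: Hf => //.
  by rewrite /double_star_rel /ds_adj /=; lia.
move=> i hi.
have hi' : i < n+m+2 by lia.
rewrite (FE i hi') (FE 0 h0) (FE 1 h1); apply: cE; apply: Hf => //.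
by rewrite /double_star_rel /ds_adj /=; lia.
Qed.

Definition pa (h x : nat) : nat :=
  if x < h then 0 else if x < 2*h then 1 else if x < 3*h then 2
  else if x < 4*h then 3 else 4.
Definition tab (p q : nat) : nat :=
  if p == q then 0
  else if ((p - q) + (q - p) == 1) || ((p - q) + (q - p) == 4) then 1 else 2.
Definition betaA h x y := tab (pa h x) (pa h y).
Definition partI (h b q : nat) := iota (q * h) (if q == 4 then b - 4 * h else h).

Lemma pa_lt5 h x : pa h x < 5.
Proof. by rewrite /pa; repeat case: ifP => _. Qed.
Lemma tab_sym p q : tab p q = tab q p.
Proof. by rewrite /tab eq_sym addnC. Qed.
Lemma tab_lt p q : tab p q < 3.
Proof. by rewrite /tab; repeat case: ifP => _. Qed.
Lemma tab0 p q : tab p q = 0 -> p = q.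
Proof. by rewrite /tab; case: eqP => // _; case: ifP. Qed.

Lemma tab_nr p q r : p < 5 -> q < 5 -> r < 5 -> NR (tab p q) (tab q r) (tab p r).
Proof.
case: p => [|[|[|[|[|p]]]]] //; case: q => [|[|[|[|[|q]]]]] //;
  case: r => [|[|[|[|[|r]]]]] // _ _ _; rewrite /NR /tab /=; lia.
Qed.

Lemma mem_part h b x : 4 * h <= b -> x < b -> x \in partI h b (pa h x).
Proof.
move=> h4 hx; rewrite /partI /pa.
case: ifP => h1; [|case: ifP => h2; [|case: ifP => h3; [|case: ifP => h4']]];
  rewrite /= mem_iota; lia.
Qed.

Lemma size_flat h b P c : 5 * h <= b -> P < 5 -> 0 < c < 3 ->
  size (flatten [seq partI h b q | q <- [seq q <- iota 0 5 | tab P q == c]]) <= b - 3 * h.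
Proof.
move=> hb; case: P => [|[|[|[|[|P]]]]] // _; case: c => [|[|[|c]]] // _;
  rewrite /= /partI /= ?size_cat !size_iota /=; lia.
Qed.

Lemma baseA n m h od (F : nat -> nat) : n = 2 * h + od -> od <= 1 ->
  (forall i, i < n+m+2 -> F i < 5 * h + od) ->
  {in iota 0 (n+m+2) &, injective F} ->
  (forall i, 1 <= i < n+2 -> betaA h (F 0) (F i) = betaA h (F 0) (F 1)) -> False.
Proof.
move=> hn hod Fb Finj hF.
set b := 5 * h + od in Fb.
have sub t : {subset t <= iota 0 (n+m+2)} -> {in t &, injective F}.
  by move=> ht; apply: sub_in2 Finj.
set P := pa h (F 0) in hF.
set c0 := betaA h (F 0) (F 1) in hF.
case: (eqVneq c0 0) => hc0.
  have := @inj_count F (iota 0 (n+2)) (partI h b P) (iota_uniq _ _).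
  rewrite size_iota /partI size_iota => H.
  suff: n + 2 <= (if P == 4 then b - 4 * h else h) by case: ifP => _; lia.
  apply: H; first by apply: sub => i; rewrite !mem_iota; lia.
  move=> i; rewrite mem_iota => hi.
  have hFi : F i < b by apply: Fb; lia.
  have -> : P = pa h (F i).
    case: (eqVneq i 0) => [->|hi0] //.
    by apply: tab0; have := hF i; rewrite /betaA -/P hc0 => ->; lia.
  by apply: mem_part; lia.
have hc : 0 < c0 < 3 by move: hc0; have := tab_lt P (pa h (F 1)); rewrite /c0 /betaA -/P; lia.
have := @inj_count F (iota 1 (n+1))
   (flatten [seq partI h b q | q <- [seq q <- iota 0 5 | tab P q == c0]]) (iota_uniq _ _).
rewrite size_iota => H.
have := @size_flat h b P c0 ltac:(lia) (pa_lt5 _ _) hc.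
suff: n + 1 <= size (flatten [seq partI h b q | q <- [seq q <- iota 0 5 | tab P q == c0]]) by lia.
apply: H; first by apply: sub => i; rewrite !mem_iota; lia.
move=> i; rewrite mem_iota => hi.
have hFi : F i < b by apply: Fb; lia.
apply/flatten_mapP; exists (pa h (F i)); last by apply: mem_part; lia.
rewrite mem_filter mem_iota pa_lt5 andbT.
by have := hF i; rewrite /betaA -/P => ->; [rewrite eqxx | lia].
Qed.

Lemma baseB n m od (F : nat -> nat) : 0 < m -> od <= 1 ->
  (forall i, i < n+m+2 -> F i < n + 1 + od) ->
  {in iota 0 (n+m+2) &, injective F} -> False.
Proof.
move=> hm hod Fb Finj.
have := @inj_count F (iota 0 (n+m+2)) (iota 0 (n+1+od)) (iota_uniq _ _) Finj.
rewrite !size_iota => H.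
suff: n + m + 2 <= n + 1 + od by lia.
apply: H => i; rewrite !mem_iota => hi; have := Fb i; lia.
Qed.

Theorem proposition3 (n m k : nat) :
  1 <= m -> m <= n -> 3 <= k ->
  gr_ge K3_rel (double_star_rel n m) k
    (if ~~ odd n then maxn (5 * (n %/ 2)) (n + 2 * m + 1) + m * (k - 3) + 1
     else maxn (5 * ((n - 1) %/ 2)) (n + 2 * m + 1) + m * (k - 3) + 2).
Proof.
move=> hm hmn hk N HN.
rewrite leqNgt; apply/negP => hL.
case: k hk hL HN => [|k'] hk hL HN; first by [].
set h := n %/ 2; set od := nat_of_bool (odd n).
have hn : n = 2 * h + od by rewrite /h /od; lia.
have hod : od <= 1 by rewrite /od; case: (odd n).
have hN0 : N <= maxn (5 * h + od) (n + 2 * m + 1 + od) + m * (k'.+1 - 3).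
  by move: hL; rewrite /h /od; case: ifP; lia.
case: (leqP (n + 2 * m + 1 + od) (5 * h + od)) => hc.
  apply: (@scheme_fail n m k' N (5 * h + od) 3 (k'.+1 - 3) (betaA h)) => //.
  - lia.
  - lia.
  - by move=> x y; rewrite /betaA tab_sym.
  - by move=> x y; apply: tab_lt.
  - by move=> x y z _ _ _; apply: tab_nr; apply: pa_lt5.
  - by move=> F Fb Finj hF; apply: (baseA hn hod Fb Finj hF).
apply: (@scheme_fail n m k' N (n + 1 + od) 1 (k'.+1 - 1) (fun _ _ => 0)) => //.
- lia.
- nia.
- by move=> *; left.
- by move=> F Fb Finj _; apply: (baseB hm hod Fb Finj).
Qed.
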